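(* Let $0<q<1$. For $0<m<1$ put $a=(1-m)/q$ and define the discrete measure $$W(m,du)=\sum_{n=0}^\infty w(m,q^n)\frac{q^n}{(q;q)_n}\delta_{q^n}(du),\qquad w(m,q^n)=a^n(aq;q)_\infty.$$ Then $W(m,\cdot)$ is a probability measure with mean $m$ and variance $(1-q)m(1-m)$, and for every $n\ge0$, with $u=q^n$, $$\widetilde{D}_{q,m}w(m,u)=\frac{u-m}{(1-q)m(1-m)}\,w(m,u),\qquad 0<m<1.$$
   Context: $(x;q)_n=\prod_{k=0}^{n-1}(1-xq^k)$, $(x;q)_\infty=\prod_{k\ge0}(1-xq^k)$. The Hahn operator centered at $1$ is $(\widetilde{D}_{q,x}f)(x)=\frac{f(x)-f(qx+1-q)}{(1-q)(x-1)}$ for $x\ne1$. $\delta_b$ is the unit point mass at $b$. *)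

(* Defs.v *)
From Stdlib Require Import Reals.
From Coquelicot Require Import Coquelicot.
Open Scope R_scope.

Fixpoint qpoch (x q : R) (n : nat) : R :=
  match n with
  | O => 1
  | S k => qpoch x q k * (1 - x * q ^ k)
  end.

Definition qpoch_inf (x q : R) : R := real (Lim_seq (fun n => qpoch x q n)).

Definition hahnD (q : R) (f : R -> R) (x : R) : R :=
  (f x - f (q * x + 1 - q)) / ((1 - q) * (x - 1)).

Definition a_par (q m : R) : R := (1 - m) / q.

Definition w (q m : R) (n : nat) : R :=
  a_par q m ^ n * qpoch_inf (a_par q m * q) q.

(* mass of W(m, .) at the atom q^n : w(m,q^n) q^n / (q;q)_n *)
Definition Wmass (q m : R) (n : nat) : R :=
  w q m n * q ^ n / qpoch q q n.

(* Main.v *)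
Require Import Defs.
From Stdlib Require Import Reals Lra.
From Coquelicot Require Import Coquelicot.
Open Scope R_scope.

Lemma powq_bounds (q : R) (n : nat) : 0 < q < 1 -> 0 < q ^ n <= 1.
Proof.
  intros Hq. induction n as [|n IH]; simpl; [lra|].
  split; [apply Rmult_lt_0_compat; lra|].
  assert (q * q ^ n <= 1 * 1) by (apply Rmult_le_compat; lra). lra.
Qed.

Lemma qpoch_pos (x q : R) (n : nat) : 0 <= x < 1 -> 0 < q < 1 -> 0 < qpoch x q n.
Proof.
  intros Hx Hq. induction n as [|n IH]; simpl; [lra|].
  apply Rmult_lt_0_compat; [exact IH|].
  destruct (powq_bounds q n Hq).
  assert (x * q ^ n <= x * 1) by (apply Rmult_le_compat_l; lra). lra.
Qed.

Definition t (q z : R) (n : nat) : R := z ^ n / qpoch q q n.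
Definition E (q z : R) : R := Series (t q z).

Lemma t_ex (q z : R) : 0 < q < 1 -> 0 < z < 1 -> ex_series (t q z).
Proof.
  intros Hq Hz. apply ex_series_Rabs.
  apply (ex_series_DAlembert _ z); [lra| |].
  - intros n. unfold t. assert (0 < qpoch q q n) by (apply qpoch_pos; lra).
    assert (0 < z ^ n) by (apply pow_lt; lra).
    apply Rgt_not_eq. apply Rlt_gt. apply Rdiv_lt_0_compat; lra.
  - apply is_lim_seq_ext with (fun n => z * / (1 - q ^ (S n))).
    + intros n. unfold t. simpl qpoch.
      assert (0 < qpoch q q n) by (apply qpoch_pos; lra).
      assert (0 < z ^ n) by (apply pow_lt; lra).
      destruct (powq_bounds q (S n) Hq) as [H1 H2]. simpl in H1, H2.
      assert (q * q^n < 1).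
      { assert (q * q^n <= q * 1) by (apply Rmult_le_compat_l; destruct (powq_bounds q n Hq); lra). lra. }
      replace (z ^ S n / (qpoch q q n * (1 - q * q ^ n)) / (z ^ n / qpoch q q n))
        with (z / (1 - q * q ^ n)) by (simpl; field; repeat split; lra).
      rewrite Rabs_right.
      * simpl. field. lra.
      * apply Rle_ge, Rlt_le, Rdiv_lt_0_compat; lra.
    + replace (Finite z) with (Rbar_mult z (Rbar_inv (1 - 0))).
      * apply is_lim_seq_scal_l. apply is_lim_seq_inv.
        -- apply (is_lim_seq_minus' _ _ 1 0); [apply is_lim_seq_const|].
           apply (is_lim_seq_incr_1 (fun n => q ^ n)). apply is_lim_seq_geom.
           rewrite Rabs_right; lra.
        -- simpl. intro H; injection H; lra.
      * simpl. f_equal. field.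
Qed.

Lemma decrR (a : nat -> R) (l : R) :
  is_series (fun k => a (S k)) (l - a 0%nat) -> is_series a l.
Proof. intros H. apply is_series_decr_1. exact H. Qed.
Lemma scalR (c : R) (a : nat -> R) (l : R) :
  is_series a l -> is_series (fun n => c * a n) (c * l).
Proof. intros H. exact (is_series_scal_l c a l H). Qed.
Lemma minusR (a b : nat -> R) (la lb : R) :
  is_series a la -> is_series b lb -> is_series (fun n => a n - b n) (la - lb).
Proof. intros H1 H2. exact (is_series_minus a b la lb H1 H2). Qed.
Lemma plusR (a b : nat -> R) (la lb : R) :
  is_series a la -> is_series b lb -> is_series (fun n => a n + b n) (la + lb).
Proof. intros H1 H2. exact (is_series_plus a b la lb H1 H2). Qed.

Lemma extR (a b : nat -> R) (l : R) :
  (forall n, a n = b n) -> is_series a l -> is_series b l.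
Proof. intros H1 H2. exact (is_series_ext a b l H1 H2). Qed.

Lemma E_shift (q z : R) : 0 < q < 1 -> 0 < z < 1 ->
  is_series (t q (q * z)) ((1 - z) * E q z).
Proof.
  intros Hq Hz.
  assert (HE : is_series (t q z) (E q z)) by (apply Series_correct, t_ex; lra).
  assert (H1 : is_series (fun n => t q z n - t q (q*z) n) (z * E q z)).
  { apply decrR.
    assert (H0 : t q z 0 - t q (q * z) 0 = 0) by (unfold t; simpl; field).
    rewrite H0, Rminus_0_r.
    apply extR with (fun k => z * t q z k).
    - intros k. unfold t. simpl qpoch.
      assert (0 < qpoch q q k) by (apply qpoch_pos; lra).
      destruct (powq_bounds q k Hq).
      assert (q * q^k < 1).
      { assert (q * q^k <= q * 1) by (apply Rmult_le_compat_l; lra). lra. }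
      rewrite Rpow_mult_distr. simpl. field. lra.
    - apply (scalR z (t q z) (E q z) HE). }
  pose proof (minusR _ _ _ _ HE H1) as H2.
  apply extR with (fun n => t q z n - (t q z n - t q (q * z) n)).
  - intros n. ring.
  - replace ((1 - z) * E q z) with (E q z - z * E q z) by ring. exact H2.
Qed.

Lemma incrR (a : nat -> R) (l : R) :
  is_series a (l + a 0%nat) -> is_series (fun k => a (S k)) l.
Proof. intros H. apply is_series_incr_1. exact H. Qed.

Lemma E_iter (q z : R) (N : nat) : 0 < q < 1 -> 0 < z < 1 ->
  E q (q ^ N * z) = E q z * qpoch z q N.
Proof.
  intros Hq Hz. induction N as [|N IH].
  - simpl. rewrite Rmult_1_l. ring.
  - destruct (powq_bounds q N Hq).
    assert (0 < q ^ N * z < 1).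
    { split; [apply Rmult_lt_0_compat; lra|].
      assert (q^N * z <= 1 * z) by (apply Rmult_le_compat_r; lra). lra. }
    pose proof (E_shift q (q ^ N * z) Hq H1) as HS.
    replace (q * (q ^ N * z)) with (q ^ S N * z) in HS by (simpl; ring).
    apply is_series_unique in HS. unfold E at 1. rewrite HS. fold (E q (q^N*z)).
    rewrite IH. simpl. ring.
Qed.

Lemma E_bound (q y z : R) : 0 < q < 1 -> 0 < y <= z -> z < 1 ->
  1 <= E q y <= 1 + (y / z) * (E q z - 1).
Proof.
  intros Hq Hy Hz.
  assert (Hey : ex_series (t q y)) by (apply t_ex; lra).
  assert (Hez : ex_series (t q z)) by (apply t_ex; lra).
  unfold E. rewrite (Series_incr_1 _ Hey).
  assert (Ht0 : t q y 0 = 1) by (unfold t; simpl; field).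
  rewrite Ht0.
  assert (HB : is_series (fun k => y / z * t q z (S k)) (y / z * (Series (t q z) - 1))).
  { apply scalR. apply incrR.
    replace (Series (t q z) - 1 + t q z 0) with (Series (t q z)).
    - apply Series_correct; exact Hez.
    - unfold t; simpl. field. }
  assert (Hpt : forall n, 0 <= t q y (S n) <= y / z * t q z (S n)).
  { intros n. unfold t.
    assert (0 < qpoch q q (S n)) by (apply qpoch_pos; lra).
    assert (0 < y ^ n) by (apply pow_lt; lra).
    assert (y ^ n <= z ^ n) by (apply pow_incr; lra).
    split.
    - apply Rlt_le, Rdiv_lt_0_compat; [simpl; apply Rmult_lt_0_compat|]; lra.
    - set (Q := qpoch q q (S n)) in *.
      change (y ^ S n) with (y * y ^ n). change (z ^ S n) with (z * z ^ n).
      apply Rle_trans with (y * z ^ n / Q); [|right; field; split; lra].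
      unfold Rdiv. apply Rmult_le_compat_r; [apply Rlt_le, Rinv_0_lt_compat; lra|].
      apply Rmult_le_compat_l; lra. }
  split.
  - assert (0 <= Series (fun k => t q y (S k))).
    { replace 0 with (Series (fun k => 0 * t q y (S k))).
      - apply Series_le; [intros n; specialize (Hpt n); lra|].
        exact (proj1 (ex_series_incr_1 (t q y)) Hey).
      - rewrite Series_scal_l. ring. }
    lra.
  - assert (Series (fun k => t q y (S k)) <= Series (fun k => y / z * t q z (S k))).
    { apply Series_le; [exact Hpt|]. eexists; exact HB. }
    rewrite (is_series_unique _ _ HB) in H. lra.
Qed.

Lemma qpoch_lim (q z : R) : 0 < q < 1 -> 0 < z < 1 ->
  is_lim_seq (fun N => qpoch z q N) (/ E q z) /\ 1 <= E q z.
Proof.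
  intros Hq Hz.
  assert (HE1 : 1 <= E q z) by (apply (E_bound q z z); lra).
  split; [|exact HE1].
  assert (Hl : is_lim_seq (fun N => E q (q ^ N * z)) 1).
  { apply is_lim_seq_le_le with (fun _ => 1) (fun N => 1 + q ^ N * (E q z - 1)).
    - intros N. destruct (powq_bounds q N Hq).
      assert (0 < q ^ N * z <= z).
      { split; [apply Rmult_lt_0_compat; lra|].
        assert (q^N * z <= 1 * z) by (apply Rmult_le_compat_r; lra). lra. }
      pose proof (E_bound q (q^N*z) z Hq H1 (proj2 Hz)).
      replace (q ^ N * z / z) with (q ^ N) in H2 by (field; lra). exact H2.
    - apply is_lim_seq_const.
    - replace (Finite 1) with (Finite (1 + 0 * (E q z - 1))) by (f_equal; ring).
      apply is_lim_seq_plus'; [apply is_lim_seq_const|].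
      apply is_lim_seq_mult'; [|apply is_lim_seq_const].
      apply is_lim_seq_geom. rewrite Rabs_right; lra. }
  apply is_lim_seq_ext with (fun N => / E q z * E q (q ^ N * z)).
  - intros N. rewrite E_iter by lra. field. lra.
  - replace (Finite (/ E q z)) with (Rbar_mult (/ E q z) 1) by (simpl; f_equal; ring).
    apply is_lim_seq_scal_l. exact Hl.
Qed.

Lemma qpoch_inf_val (q z : R) : 0 < q < 1 -> 0 < z < 1 ->
  qpoch_inf z q = / E q z.
Proof.
  intros Hq Hz. unfold qpoch_inf.
  rewrite (is_lim_seq_unique _ _ (proj1 (qpoch_lim q z Hq Hz))). reflexivity.
Qed.

Theorem mainTheorem16 (q m : R) (hq : 0 < q < 1) (hm : 0 < m < 1) :
  (forall n : nat, 0 <= Wmass q m n) /\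
  is_series (fun n => Wmass q m n) 1 /\
  is_series (fun n => Wmass q m n * q ^ n) m /\
  is_series (fun n => Wmass q m n * (q ^ n - m) ^ 2) ((1 - q) * m * (1 - m)) /\
  (forall n : nat,
     hahnD q (fun m' => w q m' n) m
     = (q ^ n - m) / ((1 - q) * m * (1 - m)) * w q m n).
Proof.
  set (z := 1 - m).
  assert (Hz : 0 < z < 1) by (unfold z; lra).
  assert (Hmz : m = 1 - z) by (unfold z; ring).
  assert (Hqz : 0 < q * z < 1).
  { split; [apply Rmult_lt_0_compat; lra|].
    assert (q * z <= 1 * z) by (apply Rmult_le_compat_r; lra). lra. }
  assert (Haq : a_par q m * q = z) by (unfold a_par, z; field; lra).
  assert (HE1 : 1 <= E q z) by (apply (proj2 (qpoch_lim q z hq Hz))).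
  assert (HL : qpoch_inf z q = / E q z) by (apply qpoch_inf_val; lra).
  assert (HEz : is_series (t q z) (E q z)) by (apply Series_correct, t_ex; lra).
  pose proof (E_shift q z hq Hz) as HE2.
  pose proof (E_shift q (q * z) hq Hqz) as HE3.
  assert (HW : forall n, Wmass q m n = / E q z * t q z n).
  { intros n. unfold Wmass, w, t. rewrite Haq, HL.
    assert (0 < qpoch q q n) by (apply qpoch_pos; lra).
    assert (Hp : a_par q m ^ n * q ^ n = z ^ n) by (rewrite <- Rpow_mult_distr, Haq; reflexivity).
    rewrite <- Hp. field. split; lra. }
  assert (HWq : forall n, Wmass q m n * q ^ n = / E q z * t q (q * z) n).
  { intros n. rewrite HW. unfold t. rewrite Rpow_mult_distr. field.
    assert (0 < qpoch q q n) by (apply qpoch_pos; lra). split; lra. }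
  assert (HWqq : forall n, Wmass q m n * q ^ n * q ^ n = / E q z * t q (q * (q * z)) n).
  { intros n. rewrite HWq. unfold t. rewrite !Rpow_mult_distr. field.
    assert (0 < qpoch q q n) by (apply qpoch_pos; lra). split; lra. }
  split; [|split; [|split; [|split]]].
  - intros n. rewrite HW. unfold t.
    assert (0 < qpoch q q n) by (apply qpoch_pos; lra).
    assert (0 < z ^ n) by (apply pow_lt; lra).
    apply Rmult_le_pos; [apply Rlt_le, Rinv_0_lt_compat; lra|].
    apply Rlt_le, Rdiv_lt_0_compat; lra.
  - apply extR with (fun n => / E q z * t q z n); [intros n; rewrite HW; reflexivity|].
    replace 1 with (/ E q z * E q z) by (field; lra). apply scalR; exact HEz.
  - apply extR with (fun n => / E q z * t q (q * z) n); [intros n; rewrite HWq; reflexivity|].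
    replace m with (/ E q z * ((1 - z) * E q z)) by (rewrite Hmz; field; lra). apply scalR; exact HE2.
  - apply extR with (fun n => (/ E q z * t q (q * (q * z)) n - 2 * m * (/ E q z * t q (q * z) n))
                              + m ^ 2 * (/ E q z * t q z n)).
    + intros n. rewrite <- HWqq, <- HWq, <- HW. ring.
    + assert (HEq : E q (q * z) = (1 - z) * E q z) by (apply is_series_unique; exact HE2).
      rewrite HEq in HE3.
      replace ((1 - q) * m * z) with
        ((/ E q z * ((1 - q * z) * ((1 - z) * E q z)) - 2 * m * (/ E q z * ((1 - z) * E q z)))
          + m ^ 2 * (/ E q z * E q z)) by (rewrite Hmz; field; lra).
      apply plusR; [apply minusR|]; repeat apply scalR; assumption.
  - intros n. unfold hahnD, w.
    assert (Ha' : a_par q (q * m + 1 - q) = z) by (unfold a_par, z; field; lra).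
    rewrite Ha', Haq, HL.
    rewrite (Rmult_comm z q), (qpoch_inf_val q (q * z) hq Hqz).
    assert (HEq : E q (q * z) = (1 - z) * E q z) by (apply is_series_unique; exact HE2).
    rewrite HEq.
    destruct (powq_bounds q n hq).
    assert (Hp : a_par q m ^ n * q ^ n = z ^ n) by (rewrite <- Rpow_mult_distr, Haq; reflexivity).
    assert (Han : a_par q m ^ n = z ^ n / q ^ n) by (rewrite <- Hp; field; lra).
    rewrite Han. rewrite Hmz. field. repeat split; lra.
Qed.
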